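(* Let $K\in\mathbb{R}^{n_u\times n_x}$, $\underline P\in\mathbb{R}^{\underline m\times n_x}$, $\underline b\in\mathbb{R}^{\underline m}$, $\bar P\in\mathbb{R}^{\bar m\times n_x}$, $\bar b\in\mathbb{R}^{\bar m}$ with $\underline b,\bar b\ge0$, and constraint sets $\mathcal{X}=\mathcal{P}(V^x,v^x)$ with $V^x\in\mathbb{R}^{m_x\times n_x}$, $v^x\in\mathbb{R}^{m_x}$, $v^x>0$, and $\mathcal{U}=\mathcal{P}(V^u,v^u)$ with $V^u\in\mathbb{R}^{m_u\times n_u}$, $v^u\in\mathbb{R}^{m_u}$, $v^u>0$. (a) If for every $i\in\{1,\dots,m_x\}$ there exist $\underline S_{[i]}\in\mathbb{D}_+^{\underline m}$, $\bar S_{[i]}\in\mathbb{D}_+^{\bar m}$ with $$\begin{bmatrix}2v^x_i-\underline b^\top\underline S_{[i]}\underline b-\bar b^\top\bar S_{[i]}\bar b & V^x_i & V^x_i\\ * & \underline P^\top\underline S_{[i]}\underline P & \mathbf 0\\ * & * & \bar P^\top\bar S_{[i]}\bar P\end{bmatrix}\succ0,$$ then $\mathcal{P}(\underline P,\underline b)\oplus\mathcal{P}(\bar P,\bar b)\subseteq\mathcal{X}$. (b) If for every $i\in\{1,\dots,m_u\}$ there exist $\underline R_{[i]}\in\mathbb{D}_+^{\underline m}$, $\bar R_{[i]}\in\mathbb{D}_+^{\bar m}$ with $$\begin{bmatrix}2v^u_i-\underline b^\top\underline R_{[i]}\underline b-\bar b^\top\bar R_{[i]}\bar b & V^u_iK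 & V^u_iK\\ * & \underline P^\top\underline R_{[i]}\underline P & \mathbf 0\\ * & * & \bar P^\top\bar R_{[i]}\bar P\end{bmatrix}\succ0,$$ then $K\mathcal{P}(\underline P,\underline b)\oplus K\mathcal{P}(\bar P,\bar b)\subseteq\mathcal{U}$.
   Context: For $M\in\mathbb{R}^{m\times n}$ and $b\in\mathbb{R}^m$, $\mathcal{P}(M,b):=\{x\in\mathbb{R}^n:-b\le Mx\le b\}$ (componentwise). $M_i$ denotes the $i$-th row of $M$, $b_i$ the $i$-th entry of $b$. $\mathbb{D}_+^m$ is the set of $m\times m$ diagonal matrices with positive diagonal entries. $\succ0$ means symmetric positive definite; $*$ denotes blocks determined by symmetry. $\oplus$ is Minkowski sum, and $K\mathcal{S}:=\{Kx:x\in\mathcal{S}\}$. *)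

(* Defs.v *)
From HB Require Import structures.
From mathcomp Require Import all_boot all_order all_algebra.
Set Implicit Arguments. Unset Strict Implicit. Unset Printing Implicit Defensive.
Import Order.TTheory GRing.Theory Num.Theory.
Local Open Scope ring_scope.

Definition polyset (R : realFieldType) (m n : nat)
  (M : 'M[R]_(m, n)) (b : 'cV[R]_m) (x : 'cV[R]_n) : Prop :=
  forall i : 'I_m, - b i 0 <= (M *m x) i 0 <= b i 0.

Definition msum (R : realFieldType) (n : nat) (A B : 'cV[R]_n -> Prop)
  (x : 'cV[R]_n) : Prop :=
  exists y z, A y /\ B z /\ x = y + z.

Definition linimg (R : realFieldType) (p n : nat) (K : 'M[R]_(p, n))
  (A : 'cV[R]_n -> Prop) (u : 'cV[R]_p) : Prop :=
  exists x, A x /\ u = K *m x.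

Definition subset_of (T : Type) (A B : T -> Prop) : Prop :=
  forall x, A x -> B x.

Definition diag_pos (R : realFieldType) (m : nat) (S : 'M[R]_m) : Prop :=
  (forall i j : 'I_m, i != j -> S i j = 0) /\ (forall i : 'I_m, 0 < S i i).

Definition posdef (R : realFieldType) (n : nat) (M : 'M[R]_n) : Prop :=
  M^T = M /\ forall x : 'cV[R]_n, x != 0 -> 0 < (x^T *m M *m x) 0 0.

Definition lmi_block (R : realFieldType) (n : nat) (c : 'M[R]_1)
  (r : 'rV[R]_n) (A B : 'M[R]_n) : 'M[R]_(1 + (n + n)) :=
  block_mx c (row_mx r r) (col_mx r^T r^T) (block_mx A 0 0 B).

(* Main.v *)
Require Import Defs.
From HB Require Import structures.
From mathcomp Require Import all_boot all_order all_algebra.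
From mathcomp Require Import ring lra.
Import Order.TTheory GRing.Theory Num.Theory.
Local Open Scope ring_scope.


Lemma quad_form (R : realFieldType) n (c : 'M[R]_1) (r : 'rV_n) A B (y z : 'cV_n) (s : R) :
  let w := col_mx (1%:M : 'M_1) (col_mx (s *: y) (s *: z)) in
  (w^T *m lmi_block c r A B *m w) 0 0 =
  c 0 0 + s * 2 * (r *m y) 0 0 + s * 2 * (r *m z) 0 0
  + s ^+ 2 * (y^T *m A *m y) 0 0 + s ^+ 2 * (z^T *m B *m z) 0 0.
Proof.
rewrite /= /lmi_block !tr_col_mx !trmx1 mul_row_block.
rewrite mul_row_block !mul_row_col !mul1mx !mulmx0 !addr0 !add0r.
rewrite mulmx1 add_row_mx mul_row_col !mulmxDl -!trmx_mul.
rewrite -(scalemxAr s r y) -(scalemxAr s r z) !linearZ /=.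
rewrite -!scalemxAl.
set ry := r *m y. set rz := r *m z. set qy := y^T *m A *m y. set qz := z^T *m B *m z.
rewrite !mxE. ring.
Qed.


Lemma quad_diag (R : realFieldType) m (S : 'M[R]_m) (u : 'cV_m) : diag_pos S ->
  (u^T *m S *m u) 0 0 = \sum_j S j j * u j 0 ^+ 2.
Proof.
move=> [Hd _]; rewrite mxE; apply: eq_bigr => j _.
rewrite mxE (bigD1 j) //= big1 ?addr0; last first.
  by move=> k kj; rewrite Hd ?mulr0 // eq_sym.
by rewrite mxE; ring.
Qed.

Lemma quad_bound (R : realFieldType) m n (P : 'M[R]_(m, n)) b S (y : 'cV_n) :
  diag_pos S -> polyset P b y ->
  (y^T *m (P^T *m S *m P) *m y) 0 0 <= (b^T *m S *m b) 0 0.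
Proof.
move=> HS Hy.
have -> : y^T *m (P^T *m S *m P) *m y = (P *m y)^T *m S *m (P *m y).
  by rewrite trmx_mul !mulmxA.
rewrite !quad_diag //; apply: ler_sum => j _.
case: HS => _ /(_ j) Sj; apply: ler_wpM2l; first exact: ltW.
have /andP [h1 h2] := Hy j.
rewrite !expr2.
have h3 : 0 <= b j 0 - (P *m y) j 0 by rewrite subr_ge0.
have h4 : 0 <= b j 0 + (P *m y) j 0 by lra.
nra.
Qed.

Lemma core (R : realFieldType) n m1 m2 (c : R) (r : 'rV_n) (P1 : 'M_(m1, n)) b1 (P2 : 'M_(m2, n)) b2 S1 S2 y z :
  diag_pos S1 -> diag_pos S2 ->
  posdef (lmi_block ((2 * c)%:M - b1^T *m S1 *m b1 - b2^T *m S2 *m b2) r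
     (P1^T *m S1 *m P1) (P2^T *m S2 *m P2)) ->
  polyset P1 b1 y -> polyset P2 b2 z -> - c <= (r *m (y + z)) 0 0 <= c.
Proof.
move=> H1 H2 [_ Hp] Hy Hz.
have q1 := @quad_bound _ _ _ P1 b1 S1 y H1 Hy; have q2 := @quad_bound _ _ _ P2 b2 S2 z H2 Hz.
have key : forall s : R, s ^+ 2 = 1 -> 0 < c * 2 - (b1^T *m S1 *m b1) 0 0 - (b2^T *m S2 *m b2) 0 0
   + s * 2 * (r *m y) 0 0 + s * 2 * (r *m z) 0 0 + (y^T *m (P1^T *m S1 *m P1) *m y) 0 0
   + (z^T *m (P2^T *m S2 *m P2) *m z) 0 0.
  move=> s hs.
  have := Hp (col_mx (1%:M : 'M_1) (col_mx (s *: y) (s *: z))).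
  rewrite quad_form hs !mul1r !mxE /= mulr1n.
  have -> : 2 * c = c * 2 by rewrite mulrC.
  apply.
  rewrite col_mx_eq0; apply/nandP; left; apply/eqP => /matrixP/(_ 0 0).
  by rewrite !mxE /= => /eqP; rewrite oner_eq0.
have k1 := key 1 (expr1n _ _).
have k2 : _ := key (-1) ltac:(by rewrite sqrrN expr1n).
rewrite mulmxDr mxE; apply/andP; split; lra.
Qed.


Arguments core {R n m1 m2 c r P1 b1 P2 b2 S1 S2 y z}.

Theorem mainTheorem4 (R : realFieldType) (nu nx ml mb mx mu : nat)
  (K : 'M[R]_(nu, nx))
  (Pl : 'M[R]_(ml, nx)) (bl : 'cV[R]_ml)
  (Pb : 'M[R]_(mb, nx)) (bb : 'cV[R]_mb)
  (Vx : 'M[R]_(mx, nx)) (vx : 'cV[R]_mx)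
  (Vu : 'M[R]_(mu, nu)) (vu : 'cV[R]_mu) :
  (forall i, 0 <= bl i 0) -> (forall i, 0 <= bb i 0) ->
  (forall i, 0 < vx i 0) -> (forall i, 0 < vu i 0) ->
  ((forall i : 'I_mx, exists (Sl : 'M[R]_ml) (Sb : 'M[R]_mb),
       diag_pos Sl /\ diag_pos Sb /\
       posdef (lmi_block ((2 * vx i 0)%:M - bl^T *m Sl *m bl - bb^T *m Sb *m bb)
                         (row i Vx) (Pl^T *m Sl *m Pl) (Pb^T *m Sb *m Pb))) ->
    subset_of (msum (polyset Pl bl) (polyset Pb bb)) (polyset Vx vx))
  /\
  ((forall i : 'I_mu, exists (Rl : 'M[R]_ml) (Rb : 'M[R]_mb),
       diag_pos Rl /\ diag_pos Rb /\
       posdef (lmi_block ((2 * vu i 0)%:M - bl^T *m Rl *m bl - bb^T *m Rb *m bb)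
                         (row i Vu *m K) (Pl^T *m Rl *m Pl) (Pb^T *m Rb *m Pb))) ->
    subset_of (msum (linimg K (polyset Pl bl)) (linimg K (polyset Pb bb)))
              (polyset Vu vu)).
Proof.
move=> _ _ _ _; split.
- move=> H x [y [z [Hy [Hz ->]]]] i.
  have [Sl [Sb [H1 [H2 Hp]]]] := H i.
  have E : (Vx *m (y + z)) i 0 = (row i Vx *m (y + z)) 0 0.
    by rewrite -row_mul [in RHS]mxE.
  rewrite E.
  exact: (core H1 H2 Hp Hy Hz).
- move=> H x [u [v [[y [Hy ->]] [[z [Hz ->]] ->]]]] i.
  have [Sl [Sb [H1 [H2 Hp]]]] := H i.
  have -> : (Vu *m (K *m y + K *m z)) i 0 = (row i Vu *m K *m (y + z)) 0 0.
    by rewrite -mulmxDr mulmxA -!row_mul [in RHS]mxE.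
  exact: (core H1 H2 Hp Hy Hz).
Qed.
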